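(* Let $m\ge n$, $1\le r\le n$, $\delta=r/n$, $\mu\in[0,1)$, $\tau\in\mathbb{Z}_{\ge1}$, $\eta>0$, and suppose Assumption (A3) holds. Then the momentum iterates $\bm m_t$ of PowerSGD+ with MSGD satisfy, for every $t\ge0$, $$\mathbb{E}\|\bm m_t\|_F^2\le\frac{92\tau^2G^2}{(1-\mu)^2\delta^2}.$$
   Context: Setting: $N$ nodes jointly minimize $f(\bm{X})=\frac1N\sum_{i=1}^N f_i(\bm{X})$ over $\bm{X}\in\mathbb{R}^{m\times n}$, where $f_i(\bm{X})=\mathbb{E}_{\xi^{(i)}\sim\mathcal{D}_i}[F(\bm{X};\xi^{(i)})]$; node $i$ queries stochastic gradients $\nabla F(\bm{X};\xi^{(i)})$, sampled independently across nodes and iterations. Assumption (A3): $\|\nabla f(\bm{X})\|_F^2\le\omega^2$ for all $\bm X$, and $\mathbb{E}\|\frac1N\sum_{i=1}^N\nabla F(\bm{X};\xi^{(i)})\|_F^2\le G^2:=\sigma^2+\omega^2$ for all $\bm X$, where $\sigma^2$ bounds the variance $\mathbb{E}\|\nabla F(\bm{X};\xi^{(i)})-\nabla f_i(\bm{X})\|_F^2$ for all $i$ and $\bm X$. $\mathrm{QR}(\bm A)$, for $\bm A\in\mathbb{R}^{m\times r}$, denotes the factor $\bm Q\in\mathbb{R}^{m\times r}$ with $\bm Q^\top\bm Q=I_r$ of an economic QR decomposition $\bm A=\bm Q\bm R$. PowerSGD+ with MSGD (step size $\eta$, momentum $\mu$, restart period $\tau$, rank $r$): initialize $\bm X_0$,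 $\bm Q_{-1}\in\mathbb{R}^{n\times r}$, $\bm m_{-1}=0$, $\bm e_0^{(i)}=0$. For $t=0,1,\dots$: each node computes $\bm g_t^{(i)}=\nabla F(\bm X_t;\xi_t^{(i)})$ and $\bm\Delta_t^{(i)}=\bm g_t^{(i)}+\bm e_t^{(i)}$; let $\bm\Delta_t=\frac1N\sum_i\bm\Delta_t^{(i)}$. If $t\not\equiv0\pmod\tau$: $\tilde{\bm P}_t=\mathrm{QR}\big(\frac1N\sum_i\bm\Delta_t^{(i)}\bm Q_{t-1}\big)$; if $t\equiv0\pmod\tau$: $\tilde{\bm P}_t$ is the matrix of the top-$r$ left singular vectors of $\bm\Delta_t$. In both cases $\bm Q_t=\frac1N\sum_i(\bm\Delta_t^{(i)})^\top\tilde{\bm P}_t$, $\widehat{\bm\Delta}_t^{(i)}=\tilde{\bm P}_t\tilde{\bm P}_t^\top\bm\Delta_t^{(i)}$, $\widehat{\bm\Delta}_t=\tilde{\bm P}_t\bm Q_t^\top$, $\bm e_{t+1}^{(i)}=\bm\Delta_t^{(i)}-\widehat{\bm\Delta}_t^{(i)}$, $\bm m_t=\mu\bm m_{t-1}+\widehat{\bm\Delta}_t$, $\bm X_{t+1}=\bm X_t-\eta\bm m_t$. *)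

(* Defs.v *)
From HB Require Import structures.
From mathcomp Require Import all_boot all_order all_algebra.
From mathcomp Require Import all_classical all_reals all_analysis.
Set Implicit Arguments. Unset Strict Implicit. Unset Printing Implicit Defensive.
Import Order.TTheory GRing.Theory Num.Theory.
Local Open Scope classical_set_scope.
Local Open Scope ring_scope.

Section PowerSGD.
Variable R : realType.

Definition frob2 (a b : nat) (A : 'M[R]_(a, b)) : R :=
  \sum_(i < a) \sum_(j < b) A i j ^+ 2.

Definition is_QR_factor (a c : nat) (A Q : 'M[R]_(a, c)) : Prop :=
  Q^T *m Q = 1%:M /\
  exists Rm : 'M[R]_c, (forall i j : 'I_c, (j < i)%N -> Rm i j = 0) /\ A = Q *m Rm.

(** P is the matrix of the top-r left singular vectors of A (a x b, b <= a):
    there is an SVD A = U S V^T with U, V orthogonal, S "diagonal" with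
    nonnegative nonincreasing singular values, and P = first r columns of U. *)
Definition is_top_left_sv (a b c : nat) (A : 'M[R]_(a, b)) (P : 'M[R]_(a, c)) : Prop :=
  exists (U : 'M[R]_a) (V : 'M[R]_b) (s : 'I_b -> R),
    U^T *m U = 1%:M /\ V^T *m V = 1%:M /\
    (forall j, 0 <= s j) /\
    (forall j k : 'I_b, (j <= k)%N -> s k <= s j) /\
    A = U *m (\matrix_(i < a, j < b) (if (i == j :> nat) then s j else 0)) *m V^T /\
    P = U *m (\matrix_(i < a, k < c) (i == k :> nat)%:R).

Definition rmx_meas (d' : measure_display) (T' : measurableType d') (a b : nat)
  (Y : T' -> 'M[R]_(a, b)) : Prop :=
  forall i j, measurable_fun setT (fun w => Y w i j).

(** Borel measurability of a matrix map, encoded as: it maps random matrices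
    (on any measurable space) to random matrices. *)
Definition mx_borel (a b c e : nat) (f : 'M[R]_(a, b) -> 'M[R]_(c, e)) : Prop :=
  forall (d' : measure_display) (T' : measurableType d') (Y : T' -> 'M[R]_(a, b)),
    rmx_meas Y -> rmx_meas (f \o Y).

(** Joint measurability of the stochastic-gradient oracle (X, xi) |-> gF X xi. *)
Definition oracle_meas (dX : measure_display) (Xi : measurableType dX) (a b : nat)
  (gF : 'M[R]_(a, b) -> Xi -> 'M[R]_(a, b)) : Prop :=
  forall (d' : measure_display) (T' : measurableType d') (Y : T' -> 'M[R]_(a, b))
    (Z : T' -> Xi),
    rmx_meas Y -> measurable_fun setT Z -> rmx_meas (fun w => gF (Y w) (Z w)).

Definition samples_indep (d : measure_display) (T : measurableType d)
  (P : probability T R) (dX : measure_display) (Xi : measurableType dX) (N : nat)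
  (xi : nat -> 'I_N -> T -> Xi) : Prop :=
  forall (s : seq (nat * 'I_N)) (A : nat -> 'I_N -> set Xi),
    uniq s -> (forall t i, measurable (A t i)) ->
    P (\bigcap_(k in [set` s]) (xi k.1 k.2 @^-1` A k.1 k.2)) =
    (\prod_(k <- s) P (xi k.1 k.2 @^-1` A k.1 k.2))%E.

(** PowerSGD+ with MSGD, run along a sample path smp : nat -> 'I_N -> Xi.
    State before iteration t: (X_t, Q_{t-1}, m_{t-1}, (e_t^(i))_i). *)
Section Algo.
Variables (m n r N : nat) (dX : measure_display) (Xi : measurableType dX).
Variables (gF : 'M[R]_(m, n) -> Xi -> 'M[R]_(m, n))
          (qr : 'M[R]_(m, r) -> 'M[R]_(m, r))
          (topr : 'M[R]_(m, n) -> 'M[R]_(m, r))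
          (eta mu : R) (tau : nat) (X0 : 'M[R]_(m, n)) (Qinit : 'M[R]_(n, r)).

Definition psgd_state := ('M[R]_(m, n) * 'M[R]_(n, r) * 'M[R]_(m, n) * ('I_N -> 'M[R]_(m, n)))%type.

Definition psgd_step (t : nat) (smp : nat -> 'I_N -> Xi) (st : psgd_state) : psgd_state :=
  let: (X, Qp, mp, e) := st in
  let Dl := fun i => gF X (smp t i) + e i in
  let Db := (N%:R)^-1 *: \sum_(i < N) Dl i in
  let Pt := if (t %% tau == 0)%N then topr Db
            else qr ((N%:R)^-1 *: \sum_(i < N) (Dl i *m Qp)) in
  let Qt := (N%:R)^-1 *: \sum_(i < N) ((Dl i)^T *m Pt) in
  let Dh := Pt *m Qt^T in
  let e' := fun i => Dl i - Pt *m Pt^T *m Dl i in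
  let mt := mu *: mp + Dh in
  (X - eta *: mt, Qt, mt, e').

Fixpoint psgd_run (t : nat) (smp : nat -> 'I_N -> Xi) : psgd_state :=
  match t with
  | 0%N => (X0, Qinit, 0, fun _ => 0)
  | t'.+1 => psgd_step t' smp (psgd_run t' smp)
  end.

(** The momentum iterate m_t (computed at iteration t). *)
Definition psgd_momentum (t : nat) (smp : nat -> 'I_N -> Xi) : 'M[R]_(m, n) :=
  (psgd_run t.+1 smp).1.2.

End Algo.
End PowerSGD.

(* Main.v *)
Require Import Defs.
From HB Require Import structures.
From mathcomp Require Import all_boot all_order all_algebra.
From mathcomp Require Import all_classical all_reals all_analysis.
From mathcomp Require Import ring lra zify measurable_realfun.
Import Order.TTheory GRing.Theory Num.Theory.
Local Open Scope classical_set_scope.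
Local Open Scope ring_scope.

Set Implicit Arguments. Unset Strict Implicit. Unset Printing Implicit Defensive.

Section LinAlg.
Variable R : realType.

Definition fdot (a b : nat) (A B : 'M[R]_(a, b)) : R :=
  \sum_(i < a) \sum_(j < b) A i j * B i j.

Lemma frob2E a b (A : 'M[R]_(a, b)) : frob2 A = fdot A A.
Proof. by apply: eq_bigr => i _; apply: eq_bigr => j _; rewrite expr2. Qed.

Lemma fdot_tr a b (A B : 'M[R]_(a, b)) : fdot A B = \tr (A^T *m B).
Proof.
rewrite /fdot /mxtrace exchange_big /=; apply: eq_bigr => j _.
by rewrite !mxE; apply: eq_bigr => i _; rewrite !mxE.
Qed.

Lemma frob2_tr a b (A : 'M[R]_(a, b)) : frob2 A = \tr (A^T *m A).
Proof. by rewrite frob2E fdot_tr. Qed.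

Lemma frob2_trT a b (A : 'M[R]_(a, b)) : frob2 A = \tr (A *m A^T).
Proof. by rewrite frob2_tr mxtrace_mulC. Qed.

Lemma frob2_ge0 a b (A : 'M[R]_(a, b)) : 0 <= frob2 A.
Proof. by apply: sumr_ge0 => i _; apply: sumr_ge0 => j _; exact: sqr_ge0. Qed.

Lemma fdotC a b (A B : 'M[R]_(a, b)) : fdot A B = fdot B A.
Proof. by apply: eq_bigr => i _; apply: eq_bigr => j _; rewrite mulrC. Qed.

Lemma frob2D a b (A B : 'M[R]_(a, b)) :
  frob2 (A + B) = frob2 A + 2 * fdot A B + frob2 B.
Proof.
rewrite /frob2 /fdot mulr_sumr -!big_split /=; apply: eq_bigr => i _.
rewrite mulr_sumr -!big_split /=; apply: eq_bigr => j _; rewrite mxE; ring.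
Qed.

Lemma frob2_eq0 a b (A : 'M[R]_(a, b)) : frob2 A = 0 -> forall i j, A i j = 0.
Proof.
move=> h i j.
have h1 : \sum_(j < b) A i j ^+ 2 = 0.
  apply: (psumr_eq0P _ h) => // k _; apply: sumr_ge0 => l _; exact: sqr_ge0.
have h2 : A i j ^+ 2 = 0.
  apply: (psumr_eq0P _ h1) => // k _; exact: sqr_ge0.
by apply/eqP; rewrite -sqrf_eq0 h2.
Qed.

Lemma fdot_CS a b (A B : 'M[R]_(a, b)) :
  fdot A B <= Num.sqrt (frob2 A) * Num.sqrt (frob2 B).
Proof.
set al := Num.sqrt (frob2 A); set be := Num.sqrt (frob2 B).
have al0 : 0 <= al by apply: sqrtr_ge0.
have be0 : 0 <= be by apply: sqrtr_ge0.
have alE : al ^+ 2 = frob2 A by rewrite sqr_sqrtr // frob2_ge0.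
have beE : be ^+ 2 = frob2 B by rewrite sqr_sqrtr // frob2_ge0.
have [al_eq0|al_gt0] := eqVneq al 0.
  have : frob2 A = 0 by rewrite -alE al_eq0 expr0n.
  move/frob2_eq0 => hA; rewrite al_eq0 mul0r /fdot.
  by rewrite big1 // => i _; rewrite big1 // => j _; rewrite hA mul0r.
have [be_eq0|be_gt0] := eqVneq be 0.
  have : frob2 B = 0 by rewrite -beE be_eq0 expr0n.
  move/frob2_eq0 => hB; rewrite be_eq0 mulr0 /fdot.
  by rewrite big1 // => i _; rewrite big1 // => j _; rewrite hB mulr0.
have key : 2 * (al * be) * fdot A B <= be ^+ 2 * frob2 A + al ^+ 2 * frob2 B.
  rewrite /fdot /frob2 !mulr_sumr -big_split /=; apply: ler_sum => i _.
  rewrite !mulr_sumr -big_split /=; apply: ler_sum => j _.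
  have := sqr_ge0 (be * A i j - al * B i j); lra.
rewrite alE beE in key.
have p : 0 < al * be by rewrite mulr_gt0 // lt0r ?al_gt0 ?be_gt0.
rewrite -alE -beE in key.
have e : be ^+ 2 * al ^+ 2 + al ^+ 2 * be ^+ 2 = 2 * (al * be) * (al * be) by ring.
rewrite e in key.
move: key p; set x := al * be; set f := fdot A B; nra.
Qed.

Definition fn a b (A : 'M[R]_(a, b)) := Num.sqrt (frob2 A).

Lemma fn_ge0 a b (A : 'M[R]_(a, b)) : 0 <= fn A.
Proof. exact: sqrtr_ge0. Qed.

Lemma fn_sqr a b (A : 'M[R]_(a, b)) : fn A ^+ 2 = frob2 A.
Proof. by rewrite sqr_sqrtr // frob2_ge0. Qed.

Lemma fn_le a b c d (A : 'M[R]_(a, b)) (B : 'M[R]_(c, d)) :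
  frob2 A <= frob2 B -> fn A <= fn B.
Proof. by move=> h; rewrite /fn ler_sqrt // frob2_ge0. Qed.

Lemma le_fn_sqr a b (A : 'M[R]_(a, b)) (x : R) : 0 <= x -> frob2 A <= x ^+ 2 -> fn A <= x.
Proof. by move=> x0 h; rewrite -(ger0_norm x0) -sqrtr_sqr /fn ler_sqrt // sqr_ge0. Qed.

Lemma fn_triangle a b (A B : 'M[R]_(a, b)) : fn (A + B) <= fn A + fn B.
Proof.
apply: le_fn_sqr; first by rewrite addr_ge0 // fn_ge0.
rewrite frob2D -(fn_sqr A) -(fn_sqr B).
have := fdot_CS A B; rewrite -/(fn A) -/(fn B) => h; nra.
Qed.

Lemma frob2_mulU a c b (U : 'M[R]_(a, c)) (M : 'M[R]_(c, b)) :
  U^T *m U = 1%:M -> frob2 (U *m M) = frob2 M.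
Proof.
by move=> hU; rewrite !frob2_tr trmx_mul mulmxA -(mulmxA _ U^T) hU mulmx1.
Qed.

Lemma frob2_mulVT a c b (M : 'M[R]_(a, c)) (V : 'M[R]_(b, c)) :
  V^T *m V = 1%:M -> frob2 (M *m V^T) = frob2 M.
Proof.
by move=> hV; rewrite !frob2_trT trmx_mul trmxK mulmxA -(mulmxA M) hV mulmx1.
Qed.

Lemma proj_pyth a c b (P : 'M[R]_(a, c)) (D : 'M[R]_(a, b)) :
  P^T *m P = 1%:M ->
  frob2 D = frob2 (P *m P^T *m D) + frob2 (D - P *m P^T *m D).
Proof.
move=> hP.
have -> : frob2 D = frob2 (P *m P^T *m D + (D - P *m P^T *m D)).
  by rewrite addrC subrK.
rewrite [LHS]frob2D fdot_tr.
have -> : (P *m P^T *m D)^T *m (D - P *m P^T *m D) = 0.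
  rewrite mulmxBr !trmx_mul trmxK.
  have -> : D^T *m (P *m P^T) *m (P *m P^T *m D) = D^T *m (P *m P^T) *m D.
    by rewrite !mulmxA -(mulmxA _ P^T P) hP mulmx1 -!mulmxA.
  by rewrite !mulmxA subrr.
by rewrite mxtrace0 mulr0 addr0.
Qed.

Lemma proj_le a c b (P : 'M[R]_(a, c)) (D : 'M[R]_(a, b)) :
  P^T *m P = 1%:M ->
  frob2 (P *m P^T *m D) <= frob2 D /\ frob2 (D - P *m P^T *m D) <= frob2 D.
Proof.
move=> hP; rewrite (proj_pyth D hP); split.
  by rewrite lerDl frob2_ge0.
by rewrite lerDr frob2_ge0.
Qed.

End LinAlg.
Section T2.
Variable R : realType.
Lemma sum_delta_nat a (k : nat) (hk : (k < a)%N) (F : 'I_a -> R) :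
  \sum_(i < a) (if (i == k :> nat) then F i else 0) = F (Ordinal hk).
Proof.
rewrite (bigD1 (Ordinal hk)) //= eqxx big1 ?addr0 // => i hi.
case: eqP => // hik; move: hi; suff -> : i = Ordinal hk by rewrite eqxx.
by apply: val_inj.
Qed.

Lemma natb_mull (b : bool) (x : R) : (b%:R * x) = if b then x else 0.
Proof. by case: b; rewrite ?mul1r ?mul0r. Qed.

Lemma sqr_if (b : bool) (x : R) : (if b then x else 0) ^+ 2 = if b then x ^+ 2 else 0.
Proof. by case: b; rewrite ?expr0n. Qed.

Lemma tail_ineq (b c : nat) (u : nat -> R) :
  (c <= b)%N -> (forall j, 0 <= u j) -> (forall j k, (j <= k)%N -> (k < b)%N -> u k <= u j) ->
  b%:R * (\sum_(0 <= j < b) u j - \sum_(0 <= j < c) u j) <= (b - c)%:R * \sum_(0 <= j < b) u j.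
Proof.
move=> hcb u0 umono.
rewrite (@big_cat_nat _ _ _ c 0 b) /= //.
set H := \sum_(0 <= j < c) u j; set Tt := \sum_(c <= j < b) u j.
have key : c%:R * Tt <= (b - c)%:R * H.
  have e1 : c%:R * Tt = \sum_(0 <= k < c) Tt by rewrite sumr_const_nat subn0 mulr_natl.
  have e2 : (b - c)%:R * H = \sum_(0 <= k < c) \sum_(c <= j < b) u k.
    rewrite /H mulr_sumr; apply: eq_bigr => k _; rewrite sumr_const_nat mulr_natl //.
  rewrite e1 e2; apply: ler_sum_nat => k /andP [_ hk]; apply: ler_sum_nat => j /andP [hj1 hj2].
  apply: umono => //; exact: (leq_trans (ltnW hk) hj1).
have Hb : (b%:R : R) = c%:R + (b - c)%:R by rewrite -natrD subnKC.
rewrite Hb; move: key; nra.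
Qed.
End T2.

Section SVD.
Variable R : realType.

Lemma svd_tail a b c (A : 'M[R]_(a, b)) (P : 'M[R]_(a, c)) :
  (0 < c)%N -> (c <= b)%N -> (b <= a)%N -> is_top_left_sv A P ->
  P^T *m P = 1%:M /\
  b%:R * frob2 (A - P *m P^T *m A) <= (b - c)%:R * frob2 A.
Proof.
move=> hc0 hcb hba [U [V [s [hU [hV [s0 [smono [hA hP]]]]]]]].
have hca : (c <= a)%N := leq_trans hcb hba.
set S := \matrix_(i < a, j < b) (if (i == j :> nat) then s j else 0) in hA.
set E := \matrix_(i < a, k < c) ((i == k :> nat)%:R : R) in hP.
have hE : E^T *m E = 1%:M.
  apply/matrixP => k k'; rewrite !mxE.
  under eq_bigr => i _ do rewrite !mxE natb_mull.
  rewrite (sum_delta_nat (leq_trans (ltn_ord k) hca)) /=.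
  by [].
have hPP : P^T *m P = 1%:M.
  by rewrite hP trmx_mul -mulmxA (mulmxA U^T) hU mul1mx hE.
split => //.
have eA : A - P *m P^T *m A = U *m (S - E *m E^T *m S) *m V^T.
  rewrite hA hP trmx_mul !mulmxA -(mulmxA _ U^T U) hU mulmx1.
  by rewrite mulmxBr mulmxBl !mulmxA.
rewrite eA frob2_mulVT // frob2_mulU // hA frob2_mulVT // frob2_mulU //.
have pyth := proj_pyth S hE.
have -> : frob2 (S - E *m E^T *m S) = frob2 S - frob2 (E *m E^T *m S).
  by rewrite [in RHS]pyth; ring.
rewrite -mulmxA frob2_mulU //.
have hb0 : (0 < b)%N := leq_trans hc0 hcb.
pose j0 : 'I_b := Ordinal hb0.
set u := fun j : nat => s (insubd j0 j) ^+ 2.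
have fS : frob2 S = \sum_(0 <= j < b) u j.
  rewrite /frob2 exchange_big big_mkord /=; apply: eq_bigr => j _.
  under eq_bigr => i _ do rewrite mxE sqr_if.
  by rewrite (sum_delta_nat (leq_trans (ltn_ord j) hba)) /u valKd.
have fES : frob2 (E^T *m S) = \sum_(0 <= j < c) u j.
  rewrite /frob2 big_mkord; apply: eq_bigr => k _.
  have -> : \sum_(j < b) (E^T *m S) k j ^+ 2 =
            \sum_(j < b) (if (j == k :> nat) then s j ^+ 2 else 0).
    apply: eq_bigr => j _; rewrite mxE.
    under eq_bigr => i _ do rewrite !mxE natb_mull.
    rewrite (sum_delta_nat (leq_trans (ltn_ord k) hca)) /=. by rewrite sqr_if eq_sym.
  rewrite (sum_delta_nat (leq_trans (ltn_ord k) hcb)) /u.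
  by congr (s _ ^+ 2); apply: val_inj; rewrite /= insubdK //; exact: (leq_trans (ltn_ord k) hcb).
rewrite fS fES; apply: tail_ineq => //.
  by move=> j; apply: sqr_ge0.
move=> j k hjk hkb; rewrite /u.
have hjb : (j < b)%N by apply: leq_ltn_trans hkb.
rewrite ler_sqr ?nnegrE ?s0 //; apply: smono.
by rewrite !insubdK.
Qed.

End SVD.

Set Implicit Arguments. Unset Strict Implicit. Unset Printing Implicit Defensive.

Lemma modn_step (k tau : nat) : (0 < tau)%N -> (k %% tau != 0)%N ->
  (((k + tau - 1) %% tau).+1 = (k.+1 + tau - 1) %% tau)%N.
Proof.
move=> ht hk.
have hr := ltn_pmod k ht.
have e := divn_eq k tau.
set q := (k %/ tau)%N in e; set r := (k %% tau)%N in e hk hr *.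
have -> : (k + tau - 1 = q.+1 * tau + r.-1)%N by rewrite e; lia.
have -> : (k.+1 + tau - 1 = q.+1 * tau + r)%N by rewrite e; lia.
rewrite !modnMDl !modn_small //; lia.
Qed.

Section Coef.
Variable R : realType.

Lemma sum_CS (H : nat) (c x : nat -> R) : (forall l, 0 <= c l) ->
  (\sum_(l < H) c l * x l) ^+ 2 <= (\sum_(l < H) c l) * (\sum_(l < H) c l * x l ^+ 2).
Proof.
move=> c0.
have e1 : (\sum_(l < H) c l * x l) ^+ 2 =
   \sum_(l < H) \sum_(k < H) (c l * c k) * (x l * x k).
  rewrite expr2 mulr_suml; apply: eq_bigr => l _; rewrite mulr_sumr.
  by apply: eq_bigr => k _; ring.
have e2 : (\sum_(l < H) c l) * (\sum_(l < H) c l * x l ^+ 2) =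
   \sum_(l < H) \sum_(k < H) (c l * c k) * x k ^+ 2.
  rewrite mulr_suml; apply: eq_bigr => l _; rewrite mulr_sumr.
  by apply: eq_bigr => k _; ring.
have e3 : (\sum_(l < H) c l) * (\sum_(l < H) c l * x l ^+ 2) =
   \sum_(l < H) \sum_(k < H) (c l * c k) * x l ^+ 2.
  rewrite e2 exchange_big /=; apply: eq_bigr => l _; apply: eq_bigr => k _; ring.
have key : 2 * (\sum_(l < H) \sum_(k < H) (c l * c k) * (x l * x k)) <=
    \sum_(l < H) \sum_(k < H) (c l * c k) * x k ^+ 2 +
    \sum_(l < H) \sum_(k < H) (c l * c k) * x l ^+ 2.
  rewrite mulr_sumr -big_split /=; apply: ler_sum => l _.
  rewrite mulr_sumr -big_split /=; apply: ler_sum => k _.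
  have := mulr_ge0 (c0 l) (c0 k); have := sqr_ge0 (x l - x k); nra.
rewrite -e1 -e2 -e3 in key; lra.
Qed.

Lemma coef_bound (W : Type) (Gn En Dn Mn : W -> nat -> R) (tau : nat) (rho mu : R)
    (H : nat) :
  (0 < tau)%N -> 0 <= rho -> rho < 1 -> 0 <= mu -> mu < 1 ->
  (forall w k, 0 <= Gn w k) ->
  (forall w k, Dn w k <= Gn w k + En w k) ->
  (forall w, En w 0 <= 0) ->
  (forall w k, En w k.+1 <= Dn w k) ->
  (forall w k, (k %% tau == 0)%N -> En w k.+1 <= rho * Dn w k) ->
  (forall w, Mn w 0 <= 0) ->
  (forall w k, Mn w k.+1 <= mu * Mn w k + Dn w k) ->
  forall k, (k <= H)%N ->
  exists cE cM : nat -> R, (forall l, 0 <= cE l) /\ (forall l, 0 <= cM l) /\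
    \sum_(l < H) cE l <= rho * (tau%:R / (1 - rho)) + ((k + tau - 1) %% tau)%:R /\
    \sum_(l < H) cM l <= (tau%:R / (1 - rho)) / (1 - mu) /\
    (forall w, En w k <= \sum_(l < H) cE l * Gn w l /\
               Mn w k <= \sum_(l < H) cM l * Gn w l).
Proof.
move=> ht rho0 rho1 mu0 mu1 G0 hD hE0 hE hEr hM0 hM.
set L := tau%:R / (1 - rho).
have hL : rho * L + tau%:R = L.
  rewrite /L; field; lra.
have L0 : 0 <= L by rewrite /L divr_ge0 // subr_ge0 ltW.
have hLM : mu * (L / (1 - mu)) + L = L / (1 - mu).
  field; lra.
have LM0 : 0 <= L / (1 - mu) by rewrite divr_ge0 // subr_ge0 ltW.
elim=> [|k IH] hk.
  exists (fun _ => 0), (fun _ => 0); do !split => //.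
  - by rewrite big1 // addr_ge0 // mulr_ge0.
  - by rewrite big1.
  - by rewrite big1 ?hE0 // => l _; rewrite mul0r.
  - by rewrite big1 ?hM0 // => l _; rewrite mul0r.
have hkH : (k < H)%N := hk.
have [cE [cM [cE0 [cM0 [sE [sM hw]]]]]] := IH (ltnW hk).
pose dk : nat -> R := fun l => (l == k)%:R.
have dk0 l : 0 <= dk l by rewrite /dk ler0n.
have sdk : \sum_(l < H) dk l = 1.
  rewrite (bigD1 (Ordinal hkH)) //= /dk eqxx big1 ?addr0 // => l hl.
  case: eqP => // hlk; move: hl; suff -> : l = Ordinal hkH by rewrite eqxx.
  by apply: val_inj.
pose cD : nat -> R := fun l => cE l + dk l.
have cD0 l : 0 <= cD l by rewrite addr_ge0.
have sD : \sum_(l < H) cD l <= L.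
  rewrite big_split /= sdk -hL.
  have hm : ((k + tau - 1) %% tau + 1 <= tau)%N.
    by have := ltn_pmod (k + tau - 1) ht; rewrite addn1.
  have h : (((k + tau - 1) %% tau + 1)%:R <= tau%:R :> R) by rewrite ler_nat.
  rewrite natrD in h; lra.
have hwD w : Dn w k <= \sum_(l < H) cD l * Gn w l.
  have -> : \sum_(l < H) cD l * Gn w l =
            \sum_(l < H) cE l * Gn w l + \sum_(l < H) dk l * Gn w l.
    by rewrite -big_split; apply: eq_bigr => l _ /=; rewrite mulrDl.
  have -> : \sum_(l < H) dk l * Gn w l = Gn w k.
    rewrite (bigD1 (Ordinal hkH)) //= /dk eqxx mul1r big1 ?addr0 // => l hl.
    case: eqP => [hlk|]; last by rewrite mul0r.
    have el : l = Ordinal hkH by apply: val_inj.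
    by move: hl; rewrite el eqxx.
  have := hD w k; have := (hw w).1; lra.
pose cM' : nat -> R := fun l => mu * cM l + cD l.
have hM' : forall w, Mn w k.+1 <= \sum_(l < H) cM' l * Gn w l.
  move=> w; have -> : \sum_(l < H) cM' l * Gn w l =
            mu * \sum_(l < H) cM l * Gn w l + \sum_(l < H) cD l * Gn w l.
    rewrite mulr_sumr -big_split; apply: eq_bigr => l _ /=; rewrite /cM'; ring.
  have := hM w k; have := hwD w; have := (hw w).2.
  move=> h1 h2 h3; apply: (le_trans h3); apply: lerD => //.
  by apply: ler_wpM2l.
have sM' : \sum_(l < H) cM' l <= L / (1 - mu).
  rewrite big_split /= -mulr_sumr -hLM; apply: lerD => //.
  by apply: ler_wpM2l.
have cM'0 l : 0 <= cM' l by rewrite /cM' addr_ge0 // mulr_ge0.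
have [hk0|hk0] := eqVneq (k %% tau)%N 0%N.
  exists (fun l => rho * cD l), cM'.
  split; first by move=> l; rewrite mulr_ge0.
  split => //; split.
    rewrite -mulr_sumr; apply: le_trans (ler_wpM2l rho0 sD) _.
    by rewrite lerDl ler0n.
  split => // w; split; last exact: hM'.
  have hk0b : (k %% tau == 0)%N by apply/eqP.
  apply: (le_trans (hEr w k hk0b)).
  under eq_bigr => l _ do rewrite -mulrA.
  by rewrite -mulr_sumr; apply: ler_wpM2l => //; apply: hwD.
exists cD, cM'.
split => //; split => //; split.
  rewrite -(modn_step ht hk0) big_split /= sdk -addn1 natrD addrA lerD2r //.
split => // w; split; last exact: hM'.
apply: (le_trans (hE w k)); exact: hwD.
Qed.

End Coef.

Set Implicit Arguments. Unset Strict Implicit. Unset Printing Implicit Defensive.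

Lemma tr_avg (R : comRingType) m n r N (c : R) (D : 'I_N -> 'M[R]_(m,n)) (P : 'M[R]_(m,r)) :
  (c *: \sum_(i < N) (D i)^T *m P)^T = P^T *m (c *: \sum_(i < N) D i).
Proof.
rewrite linearZ /= -scalemxAr; congr (_ *: _).
rewrite -mulmx_suml trmx_mul; congr (_ *m _).
by rewrite linear_sum /=; apply: eq_bigr => i _; rewrite trmxK.
Qed.

Lemma frob2Z (R : realType) a b (c : R) (A : 'M[R]_(a, b)) : frob2 (c *: A) = c ^+ 2 * frob2 A.
Proof.
rewrite /frob2 mulr_sumr; apply: eq_bigr => i _; rewrite mulr_sumr; apply: eq_bigr => j _.
by rewrite mxE exprMn.
Qed.

Lemma fnZ (R : realType) a b (c : R) (A : 'M[R]_(a, b)) : 0 <= c -> fn (c *: A) = c * fn A.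
Proof.
move=> c0; rewrite /fn frob2Z sqrtrM ?sqr_ge0 // sqrtr_sqr ger0_norm //.
Qed.

Section PathFacts.
Variables (R : realType) (m n r N : nat) (dX : measure_display) (Xi : measurableType dX).
Variables (gF : 'M[R]_(m, n) -> Xi -> 'M[R]_(m, n))
          (qr : 'M[R]_(m, r) -> 'M[R]_(m, r))
          (topr : 'M[R]_(m, n) -> 'M[R]_(m, r))
          (eta mu : R) (tau : nat) (X0 : 'M[R]_(m, n)) (Qinit : 'M[R]_(n, r))
          (smp : nat -> 'I_N -> Xi).

Definition pst k := psgd_run gF qr topr eta mu tau X0 Qinit k smp.
Definition gavg k : 'M[R]_(m, n) := (N%:R)^-1 *: \sum_(i < N) gF (pst k).1.1.1 (smp k i).
Definition eavg k : 'M[R]_(m, n) := (N%:R)^-1 *: \sum_(i < N) (pst k).2 i.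
Definition Dlt k := gavg k + eavg k.
Definition Ptt k : 'M[R]_(m, r) :=
  if (k %% tau == 0)%N then topr (Dlt k)
  else qr ((N%:R)^-1 *: \sum_(i < N) ((gF (pst k).1.1.1 (smp k i) + (pst k).2 i) *m (pst k).1.1.2)).

Lemma pstS k : pst k.+1 = psgd_step gF qr topr eta mu tau k smp (pst k).
Proof. by []. Qed.

Lemma Db_eq k : (N%:R)^-1 *: \sum_(i < N) (gF (pst k).1.1.1 (smp k i) + (pst k).2 i) = Dlt k.
Proof. by rewrite big_split scalerDr. Qed.

Lemma eavgS k : eavg k.+1 = Dlt k - Ptt k *m (Ptt k)^T *m Dlt k.
Proof.
rewrite /eavg pstS /Ptt -Db_eq.
case: (pst k) => [[[X Q] M] e] /=.
rewrite sumrB scalerBr; congr (_ - _).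
by rewrite -scalemxAr -mulmx_sumr.
Qed.

Lemma MS k : (pst k.+1).1.2 = mu *: (pst k).1.2 + Ptt k *m (Ptt k)^T *m Dlt k.
Proof.
rewrite pstS /Ptt -Db_eq.
case: (pst k) => [[[X Q] M] e] /=; congr (_ + _).
by rewrite -mulmxA tr_avg.
Qed.

Lemma eavg0 : eavg 0 = 0.
Proof. by rewrite /eavg /= big1 ?scaler0. Qed.

Lemma M0 : (pst 0).1.2 = 0.
Proof. by []. Qed.

Hypotheses (hqr : forall A, is_QR_factor A (qr A)) (htop : forall A, is_top_left_sv A (topr A)).
Hypotheses (hr0 : (0 < r)%N) (hrn : (r <= n)%N) (hnm : (n <= m)%N).

Lemma PtP k : (Ptt k)^T *m Ptt k = 1%:M.
Proof.
rewrite /Ptt; case: ifP => _; last first.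
  by match goal with |- (qr ?A)^T *m _ = _ => case: (hqr A) end.
by case: (svd_tail hr0 hrn hnm (htop (Dlt k))).
Qed.

Lemma Pt_tail k : (k %% tau == 0)%N ->
  n%:R * frob2 (Dlt k - Ptt k *m (Ptt k)^T *m Dlt k) <= (n - r)%:R * frob2 (Dlt k).
Proof.
by move=> hk; rewrite /Ptt hk; case: (svd_tail hr0 hrn hnm (htop (Dlt k))).
Qed.

Definition rhoc : R := 1 - (r%:R / n%:R) / 2.

Lemma nf_D k : fn (Dlt k) <= fn (gavg k) + fn (eavg k).
Proof. exact: fn_triangle. Qed.

Lemma nf_E k : fn (eavg k.+1) <= fn (Dlt k).
Proof. by rewrite eavgS; apply: fn_le; case: (proj_le (Dlt k) (PtP k)). Qed.

Lemma nf_Er k : (k %% tau == 0)%N -> fn (eavg k.+1) <= rhoc * fn (Dlt k).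
Proof.
move=> hk; have := Pt_tail hk; rewrite -eavgS.
have n0 : (0 < n)%N := leq_trans hr0 hrn.
have nn0 : 0 < (n%:R : R) by rewrite ltr0n.
rewrite natrB //.
set fE := frob2 (eavg k.+1); set fD := frob2 (Dlt k).
set nn := (n%:R : R); set rr := (r%:R : R) => h.
have rrn : rr <= nn by rewrite ler_nat.
have rr0 : 0 <= rr by rewrite ler0n.
have fD0 : 0 <= fD by apply: frob2_ge0.
have h1 : fE <= (1 - rr / nn) * fD.
  have -> : (1 - rr / nn) * fD = ((nn - rr) * fD) / nn by field; lra.
  by rewrite ler_pdivlMr // mulrC.
have d1 : rr / nn <= 1 by rewrite ler_pdivrMr // mul1r.
have d0 : 0 <= rr / nn by rewrite divr_ge0 // ltW.
have rh0 : 0 <= rhoc by rewrite /rhoc; lra.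
apply: le_fn_sqr; first by rewrite mulr_ge0 // fn_ge0.
rewrite exprMn fn_sqr -/fD /rhoc -/nn -/rr.
move: h1; set d := rr / nn => h1.
have e : (1 - d / 2) ^+ 2 * fD = (1 - d) * fD + d ^+ 2 * fD / 4 by field.
rewrite e -/fE; have := mulr_ge0 (sqr_ge0 d) fD0; lra.
Qed.

Lemma nf_M k : 0 <= mu -> fn (pst k.+1).1.2 <= mu * fn (pst k).1.2 + fn (Dlt k).
Proof.
move=> mu0; rewrite MS; apply: (le_trans (fn_triangle _ _)).
rewrite fnZ //; apply: lerD => //.
by apply: fn_le; case: (proj_le (Dlt k) (PtP k)).
Qed.

End PathFacts.

Set Implicit Arguments. Unset Strict Implicit. Unset Printing Implicit Defensive.

Section RmxMeas.
Variables (R : realType) (d' : measure_display) (T' : measurableType d').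

Lemma rmx_cst a b (A : 'M[R]_(a, b)) : rmx_meas (fun _ : T' => A).
Proof. by move=> i j; exact: measurable_cst. Qed.

Lemma rmx_add a b (Y Z : T' -> 'M[R]_(a, b)) :
  rmx_meas Y -> rmx_meas Z -> rmx_meas (fun w => Y w + Z w).
Proof.
move=> hY hZ i j.
have -> : (fun w => (Y w + Z w) i j) = (fun w => Y w i j) \+ (fun w => Z w i j).
  by apply/funext => w; rewrite mxE.
exact: measurable_funD.
Qed.

Lemma rmx_scale a b (c : R) (Y : T' -> 'M[R]_(a, b)) :
  rmx_meas Y -> rmx_meas (fun w => c *: Y w).
Proof.
move=> hY i j.
have -> : (fun w => (c *: Y w) i j) = (fun w => c) \* (fun w => Y w i j).
  by apply/funext => w; rewrite mxE.
by apply: measurable_funM => //; exact: measurable_cst.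
Qed.

Lemma rmx_opp a b (Y : T' -> 'M[R]_(a, b)) : rmx_meas Y -> rmx_meas (fun w => - Y w).
Proof.
move=> hY; have -> : (fun w => - Y w) = (fun w => (-1) *: Y w).
  by apply/funext => w; rewrite scaleN1r.
exact: rmx_scale.
Qed.

Lemma rmx_sub a b (Y Z : T' -> 'M[R]_(a, b)) :
  rmx_meas Y -> rmx_meas Z -> rmx_meas (fun w => Y w - Z w).
Proof. by move=> hY hZ; apply: rmx_add => //; exact: rmx_opp. Qed.

Lemma rmx_sum a b N (Y : 'I_N -> T' -> 'M[R]_(a, b)) :
  (forall i, rmx_meas (Y i)) -> rmx_meas (fun w => \sum_(i < N) Y i w).
Proof.
move=> hY i j.
have -> : (fun w => (\sum_(k < N) Y k w) i j) = (fun w => \sum_(k < N) Y k w i j).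
  by apply/funext => w; rewrite summxE.
by apply: measurable_sum => k; exact: hY.
Qed.

Lemma rmx_mul a b c (Y : T' -> 'M[R]_(a, b)) (Z : T' -> 'M[R]_(b, c)) :
  rmx_meas Y -> rmx_meas Z -> rmx_meas (fun w => Y w *m Z w).
Proof.
move=> hY hZ i j.
have -> : (fun w => (Y w *m Z w) i j) = (fun w => \sum_(k < b) Y w i k * Z w k j).
  by apply/funext => w; rewrite mxE.
apply: measurable_sum => k; exact: measurable_funM.
Qed.

Lemma rmx_tr a b (Y : T' -> 'M[R]_(a, b)) : rmx_meas Y -> rmx_meas (fun w => (Y w)^T).
Proof.
move=> hY i j.
have -> : (fun w => (Y w)^T i j) = (fun w => Y w j i) by apply/funext => w; rewrite mxE.
exact: hY.
Qed.

Lemma frob2_meas a b (Y : T' -> 'M[R]_(a, b)) :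
  rmx_meas Y -> measurable_fun setT (fun w => frob2 (Y w)).
Proof.
move=> hY; apply: measurable_sum => i; apply: measurable_sum => j.
exact: measurable_funX.
Qed.

End RmxMeas.

Section StateMeas.
Variables (R : realType) (m n r N : nat) (dX : measure_display) (Xi : measurableType dX).
Variables (gF : 'M[R]_(m, n) -> Xi -> 'M[R]_(m, n))
          (qr : 'M[R]_(m, r) -> 'M[R]_(m, r))
          (topr : 'M[R]_(m, n) -> 'M[R]_(m, r))
          (eta mu : R) (tau : nat) (X0 : 'M[R]_(m, n)) (Qinit : 'M[R]_(n, r)).
Hypotheses (hgF : oracle_meas gF) (hqr : mx_borel qr) (htop : mx_borel topr).
Variables (d' : measure_display) (T' : measurableType d').

Definition st_meas (S : T' -> psgd_state R m n r N) :=
  [/\ rmx_meas (fun w => (S w).1.1.1), rmx_meas (fun w => (S w).1.1.2),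
      rmx_meas (fun w => (S w).1.2) & forall i, rmx_meas (fun w => (S w).2 i)].

Lemma step_eq k smp (st : psgd_state R m n r N) :
  psgd_step gF qr topr eta mu tau k smp st =
  let X := st.1.1.1 in let Qp := st.1.1.2 in let mp := st.1.2 in let e := st.2 in
  let Dl := fun i => gF X (smp k i) + e i in
  let Db := (N%:R)^-1 *: \sum_(i < N) Dl i in
  let Pt := if (k %% tau == 0)%N then topr Db
            else qr ((N%:R)^-1 *: \sum_(i < N) (Dl i *m Qp)) in
  let Qt := (N%:R)^-1 *: \sum_(i < N) ((Dl i)^T *m Pt) in
  let Dh := Pt *m Qt^T in
  let e' := fun i => Dl i - Pt *m Pt^T *m Dl i in
  let mt := mu *: mp + Dh in
  (X - eta *: mt, Qt, mt, e').
Proof. by case: st => [[[X Q] M] e]. Qed.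

Lemma step_meas k (smpw : T' -> nat -> 'I_N -> Xi) (S : T' -> psgd_state R m n r N) :
  (forall i, measurable_fun setT (fun w => smpw w k i)) -> st_meas S ->
  st_meas (fun w => psgd_step gF qr topr eta mu tau k (smpw w) (S w)).
Proof.
move=> hs [hX hQ hM he].
have hDl : forall i, rmx_meas (fun w => gF (S w).1.1.1 (smpw w k i) + (S w).2 i).
  by move=> i; apply: rmx_add => //; exact: hgF.
have hDb : rmx_meas (fun w => (N%:R)^-1 *: \sum_(i < N) (gF (S w).1.1.1 (smpw w k i) + (S w).2 i)).
  by apply: rmx_scale; apply: rmx_sum => i; exact: hDl.
have hPt : rmx_meas (fun w => if (k %% tau == 0)%N
    then topr ((N%:R)^-1 *: \sum_(i < N) (gF (S w).1.1.1 (smpw w k i) + (S w).2 i))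
    else qr ((N%:R)^-1 *: \sum_(i < N) ((gF (S w).1.1.1 (smpw w k i) + (S w).2 i) *m (S w).1.1.2))).
  have hA : rmx_meas (fun w => (N%:R)^-1 *: \sum_(i < N) ((gF (S w).1.1.1 (smpw w k i) + (S w).2 i) *m (S w).1.1.2)).
    apply: rmx_scale; apply: rmx_sum => i; apply: rmx_mul => //; exact: hDl.
  case: (k %% tau == 0)%N; first exact: (htop hDb).
  exact: (hqr hA).
set Pt := (fun w => if _ then _ else _) in hPt.
have hQt : rmx_meas (fun w => (N%:R)^-1 *: \sum_(i < N) ((gF (S w).1.1.1 (smpw w k i) + (S w).2 i)^T *m Pt w)).
  apply: rmx_scale; apply: rmx_sum => i; apply: rmx_mul => //; exact/rmx_tr/hDl.
have hmt : rmx_meas (fun w => mu *: (S w).1.2 + Pt w *m ((N%:R)^-1 *: \sum_(i < N) ((gF (S w).1.1.1 (smpw w k i) + (S w).2 i)^T *m Pt w))^T).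
  by apply: rmx_add; [exact: rmx_scale|apply: rmx_mul => //; exact: rmx_tr].
split => /=.
- rewrite /=; under [X in rmx_meas X]funext => w do rewrite step_eq /=.
  by apply: rmx_sub => //; exact: rmx_scale.
- by under [X in rmx_meas X]funext => w do rewrite step_eq /=.
- by under [X in rmx_meas X]funext => w do rewrite step_eq /=.
- move=> i; under [X in rmx_meas X]funext => w do rewrite step_eq /=.
  apply: rmx_sub; first exact: hDl.
  by apply: rmx_mul; [apply: rmx_mul => //; exact: rmx_tr|exact: hDl].
Qed.

Lemma run_meas k (smpw : T' -> nat -> 'I_N -> Xi) :
  (forall s i, (s < k)%N -> measurable_fun setT (fun w => smpw w s i)) ->
  st_meas (fun w => psgd_run gF qr topr eta mu tau X0 Qinit k (smpw w)).
Proof.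
elim: k => [|k IH] hs.
  split => /=; try exact: rmx_cst.
  by move=> i; exact: rmx_cst.
apply: (step_meas (k := k)); first by move=> i; apply: hs.
by apply: IH => s i hsk; apply: hs; exact: ltnW.
Qed.

End StateMeas.

Set Implicit Arguments. Unset Strict Implicit. Unset Printing Implicit Defensive.

Section Indep.
Context (R : realType) (d : measure_display) (T : measurableType d) (P : probability T R).

Lemma P_fin (A : set T) : measurable A -> P A = (fine (P A))%:E.
Proof.
move=> mA; rewrite fineK // ge0_fin_numE ?measure_ge0 //.
by apply: (le_lt_trans (probability_le1 P mA)); rewrite ltry.
Qed.

Lemma indep_ext (G1 G2 : set (set T)) :
  G1 `<=` measurable -> G2 `<=` measurable ->
  setI_closed G1 -> setI_closed G2 -> G1 setT -> G2 setT ->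
  (forall A B, G1 A -> G2 B -> P (A `&` B) = (P A * P B)%E) ->
  forall A B, <<s G1 >> A -> <<s G2 >> B -> P (A `&` B) = (P A * P B)%E.
Proof.
move=> G1m G2m I1 I2 T1 T2 h.
have sG1m : <<s G1 >> `<=` measurable := smallest_sub (@sigma_algebra_measurable _ T) G1m.
have sG2m : <<s G2 >> `<=` measurable := smallest_sub (@sigma_algebra_measurable _ T) G2m.
have step1 : forall B, G2 B -> forall A, <<s G1 >> A -> P (A `&` B) = (P A * P B)%E.
  move=> B G2B.
  have mB := G2m _ G2B.
  pose c : {nonneg R} := NngNum (fine_ge0 (measure_ge0 P B)).
  have m12 : forall A', G1 A' -> mrestr P mB A' = mscale c P A'.
    by move=> A' G1A'; rewrite /mrestr /mscale /= h // muleC -P_fin.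
  have goo : forall k : nat, (mrestr P mB ((fun _ => setT) k) < +oo)%E.
    move=> k; rewrite /mrestr setTI; apply: (le_lt_trans (probability_le1 P mB)).
    by rewrite ltry.
  move=> A sA.
  have := @g_sigma_algebra_measure_unique _ _ _ G1 G1m (fun _ => setT) (fun _ => T1)
    (bigcup_const _ (ex_intro _ 0%N I)) (mrestr P mB) (mscale c P) I1 m12 goo A sA.
  move=> e; have e' : P (A `&` B) = ((fine (P B))%:E * P A)%E := e.
  by rewrite e' muleC -P_fin.
move=> A B sA sB.
have mA := sG1m _ sA.
pose c : {nonneg R} := NngNum (fine_ge0 (measure_ge0 P A)).
have m12 : forall B', G2 B' -> mrestr P mA B' = mscale c P B'.
  by move=> B' G2B'; rewrite /mrestr /mscale /= setIC step1 // -P_fin.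
have goo : forall k : nat, (mrestr P mA ((fun _ => setT) k) < +oo)%E.
  move=> k; rewrite /mrestr setTI; apply: (le_lt_trans (probability_le1 P mA)).
  by rewrite ltry.
have := @g_sigma_algebra_measure_unique _ _ _ G2 G2m (fun _ => setT) (fun _ => T2)
    (bigcup_const _ (ex_intro _ 0%N I)) (mrestr P mA) (mscale c P) I2 m12 goo B sB.
move=> e; have e' : P (B `&` A) = ((fine (P A))%:E * P B)%E := e.
by rewrite setIC e' -P_fin.
Qed.
End Indep.

Section Cyl.
Context (R : realType) (d : measure_display) (T : measurableType d) (P : probability T R)
  (dX : measure_display) (Xi : measurableType dX) (N : nat) (xi : nat -> 'I_N -> T -> Xi).
Hypotheses (hxi : forall t i, measurable_fun setT (xi t i)) (hind : samples_indep P xi).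

Definition cyl (s : seq (nat * 'I_N)) (A : nat -> 'I_N -> set Xi) : set T :=
  \bigcap_(k in [set` s]) (xi k.1 k.2 @^-1` A k.1 k.2).
Definition famM (A : nat -> 'I_N -> set Xi) := forall t i, measurable (A t i).
Definition cylS s : set (set T) := [set C | exists2 A, famM A & C = cyl s A].

Lemma pre_meas t i (B : set Xi) : measurable B -> measurable (xi t i @^-1` B).
Proof. by move=> mB; rewrite -[X in measurable X]setTI; apply: hxi. Qed.

Lemma cyl_meas s A : famM A -> measurable (cyl s A).
Proof.
move=> hA; apply: fin_bigcap_measurable; first exact: finite_seq.
by move=> k _; apply: pre_meas.
Qed.

Lemma cylS_meas s : cylS s `<=` measurable.
Proof. by move=> C [A hA ->]; exact: cyl_meas. Qed.

Lemma cylS_setI s : setI_closed (cylS s).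
Proof.
move=> C1 C2 [A hA ->] [B hB ->].
exists (fun t i => A t i `&` B t i).
  by move=> t i; apply: measurableI.
by rewrite /cyl -bigcapI.
Qed.

Lemma cylS_T s : cylS s setT.
Proof.
exists (fun _ _ => setT); first by move=> t i; exact: measurableT.
by apply/seteqP; split => // x _ k _.
Qed.

Lemma cylS_pre s t i B : (t, i) \in s -> measurable B -> cylS s (xi t i @^-1` B).
Proof.
move=> hti mB.
exists (fun t' i' => if (t' == t) && (i' == i) then B else setT).
  by move=> t' i'; case: ifP => _ //; exact: measurableT.
apply/seteqP; split => x /=.
  move=> hx [t' i'] /= _; case: ifP => // /andP [/eqP -> /eqP ->] //.
by move=> /(_ (t, i) hti) /=; rewrite !eqxx.
Qed.

Lemma cyl_indep l s1 s2 A B : uniq (s1 ++ s2) ->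
  (forall k, k \in s1 -> (k.1 < l)%N) -> (forall k, k \in s2 -> ~~ (k.1 < l)%N) ->
  famM A -> famM B ->
  P (cyl s1 A `&` cyl s2 B) = (P (cyl s1 A) * P (cyl s2 B))%E.
Proof.
move=> hu h1 h2 hA hB.
pose C t i := if (t < l)%N then A t i else B t i.
have hC : famM C by move=> t i; rewrite /C; case: ifP.
have eC : cyl s1 A `&` cyl s2 B = cyl (s1 ++ s2) C.
  apply/seteqP; split => x /=.
    move=> [hx1 hx2] k; rewrite /= mem_cat => /orP [k1|k2]; rewrite /C.
      by rewrite h1 //; apply: hx1.
    by rewrite (negbTE (h2 _ k2)); apply: hx2.
  move=> hx; split => k /= hk.
    by have := hx k; rewrite /= mem_cat hk /C h1 //; apply.
  by have := hx k; rewrite /= mem_cat hk orbT /C (negbTE (h2 _ hk)); apply.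
have hu1 : uniq s1 by move: hu; rewrite cat_uniq => /andP [].
have hu2 : uniq s2 by move: hu; rewrite cat_uniq => /and3P [].
rewrite eC /cyl !hind // big_cat /=; congr (_ * _)%E.
  by apply: eq_big_seq => k hk; rewrite /C h1.
by apply: eq_big_seq => k hk; rewrite /C (negbTE (h2 _ hk)).
Qed.

End Cyl.

Section Fub.
Context (R : realType) (d : measure_display) (T : measurableType d) (P : probability T R).
Variables (F0 G0 : set (set T)).
Hypotheses (F0m : F0 `<=` measurable) (G0m : G0 `<=` measurable).
Hypothesis indep : forall A B, <<s F0 >> A -> <<s G0 >> B -> P (A `&` B) = (P A * P B)%E.

Let TF := g_sigma_algebraType F0.
Let TG := g_sigma_algebraType G0.

Lemma idF_meas : measurable_fun setT (fun w : T => (w : TF)).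
Proof.
move=> _ Y mY; rewrite setTI.
exact: (smallest_sub (@sigma_algebra_measurable _ T) F0m).
Qed.

Lemma idG_meas : measurable_fun setT (fun w : T => (w : TG)).
Proof.
move=> _ Y mY; rewrite setTI.
exact: (smallest_sub (@sigma_algebra_measurable _ T) G0m).
Qed.

Lemma fubini_indep (phi : TF * TG -> R) (c : R) :
  measurable_fun setT (fun p => (phi p)%:E) -> (forall p, 0 <= phi p) ->
  (forall x : TF, (\int[P]_w (phi (x, (w : TG)))%:E <= c%:E)%E) ->
  (\int[P]_w (phi ((w : TF), (w : TG)))%:E <= c%:E)%E.
Proof.
move=> mphi phi0 hx.
pose idF : {mfun T >-> TF} := HB.pack (fun w : T => (w : TF)) (isMeasurableFun.Build _ _ _ _ _ idF_meas).
pose idG : {mfun T >-> TG} := HB.pack (fun w : T => (w : TG)) (isMeasurableFun.Build _ _ _ _ _ idG_meas).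
have diag_meas : measurable_fun setT (fun w : T => ((w : TF), (w : TG))).
  exact: measurable_fun_pair idF_meas idG_meas.
pose dg : {mfun T >-> (TF * TG)%type} := HB.pack (fun w : T => ((w : TF), (w : TG)))
  (isMeasurableFun.Build _ _ _ _ _ diag_meas).
pose PF := distribution P idF.
pose PG := distribution P idG.
pose PJ := distribution P dg.
have hJ : forall X, measurable X -> (PF \x PG)%E X = PJ X.
  apply: product_measure_unique => A B mA mB.
  rewrite /PJ /PF /PG /distribution /pushforward /=.
  change (P (A `&` B) = (P A * P B)%E).
  exact: indep.
have e1 : (\int[P]_w (phi ((w : TF), (w : TG)))%:E = \int[PJ]_p (phi p)%:E)%E.
  by rewrite /PJ ge0_integral_distribution // => p; rewrite lee_fin.
rewrite e1 (eq_measure_integral (PF \x PG)%E); last by move=> X mX _; exact/esym/hJ.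
have f0 : forall p : (TF * TG)%type, (0 <= (phi p)%:E)%E by move=> p; rewrite lee_fin.
rewrite (fubini_tonelli1 _ mphi f0).
apply: le_trans (_ : (\int[PF]_x (cst c%:E) x <= _)%E).
  apply: ge0_le_integral => //.
  all: try (by move=> x _; apply: integral_ge0 => y _; rewrite lee_fin).
  all: try (exact: measurable_cst).
  all: try (exact: measurable_fun_fubini_tonelli_F).
  move=> x _; rewrite /fubini_F.
  have mx := measurable_fun_pair2 x mphi.
  have f0' : forall y : TG, (0 <= (fun y => (phi (x, y))%:E) y)%E by move=> y; rewrite lee_fin.
  rewrite (@ge0_integral_distribution _ _ _ _ _ P idG _ mx f0').
  exact: hx.
have h1 : PF setT = 1%E := probability_setT _.
rewrite integral_cst //. change ((c%:E * PF setT <= c%:E)%E). by rewrite h1 mule1.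
Qed.

End Fub.

Set Implicit Arguments. Unset Strict Implicit. Unset Printing Implicit Defensive.

Section GradBound.
Context (R : realType) (d : measure_display) (T : measurableType d) (P : probability T R)
  (dX : measure_display) (Xi : measurableType dX) (m n r N : nat)
  (xi : nat -> 'I_N -> T -> Xi)
  (gF : 'M[R]_(m, n) -> Xi -> 'M[R]_(m, n))
  (qr : 'M[R]_(m, r) -> 'M[R]_(m, r)) (topr : 'M[R]_(m, n) -> 'M[R]_(m, r))
  (eta mu : R) (tau : nat) (X0 : 'M[R]_(m, n)) (Qinit : 'M[R]_(n, r)) (G2 : R).
Hypotheses (hxi : forall t i, measurable_fun setT (xi t i)) (hind : samples_indep P xi).
Hypotheses (hgF : oracle_meas gF) (hqr : mx_borel qr) (htop : mx_borel topr).
Hypothesis hG : forall t X, (\int[P]_w (frob2 ((N%:R)^-1 *: \sum_(i < N) gF X (xi t i w)))%:E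
                 <= G2%:E)%E.

Definition smpw (w : T) : nat -> 'I_N -> Xi := fun s i => xi s i w.

Definition Spast (l : nat) : seq (nat * 'I_N) := [seq (s, i) | s <- iota 0 l, i <- enum 'I_N].
Definition Snow (l : nat) : seq (nat * 'I_N) := [seq (l, i) | i <- enum 'I_N].

Lemma uniq_SS l : uniq (Spast l ++ Snow l).
Proof.
rewrite cat_uniq; apply/and3P; split.
- apply: allpairs_uniq; [exact: iota_uniq|exact: enum_uniq|].
  by move=> [a b] [c e] _ _ /=.
- apply/hasPn => k /mapP [i _ ->]; apply/negP => /allpairsP [[s j] [/=]].
  by rewrite mem_iota add0n => /andP [_ hs] _ [hsl _]; move: hs; rewrite hsl ltnn.
- by rewrite map_inj_uniq ?enum_uniq // => i j [].
Qed.

Lemma Spast_lt l k : k \in Spast l -> (k.1 < l)%N.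
Proof. by move=> /allpairsP [[s j] [/=]]; rewrite mem_iota add0n => /andP [_ hs] _ ->. Qed.

Lemma Snow_ge l k : k \in Snow l -> ~~ (k.1 < l)%N.
Proof. by move=> /mapP [i _ ->] /=; rewrite ltnn. Qed.

Lemma Spast_mem l s i : (s < l)%N -> (s, i) \in Spast l.
Proof.
move=> hs; apply/allpairsP; exists (s, i) => /=; split => //.
  by rewrite mem_iota add0n.
exact: mem_enum.
Qed.

Lemma grad_bound l :
  (\int[P]_w (frob2 (gavg gF qr topr eta mu tau X0 Qinit (smpw w) l))%:E <= G2%:E)%E.
Proof.
pose F0 := cylS xi (Spast l).
pose G0 := cylS xi (Snow l).
have F0m : F0 `<=` measurable by apply: cylS_meas.
have G0m : G0 `<=` measurable by apply: cylS_meas.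
have ind : forall A B, <<s F0 >> A -> <<s G0 >> B -> P (A `&` B) = (P A * P B)%E.
  apply: indep_ext => //.
  - exact: cylS_setI.
  - exact: cylS_setI.
  - exact: cylS_T.
  - exact: cylS_T.
  move=> A B [fA hfA ->] [fB hfB ->].
  apply: (cyl_indep hind (l := l)) => //.
  - exact: uniq_SS.
  - exact: Spast_lt.
  - exact: Snow_ge.
pose TF := g_sigma_algebraType F0.
pose TG := g_sigma_algebraType G0.
pose Xl (x : TF) := (pst gF qr topr eta mu tau X0 Qinit (smpw x) l).1.1.1.
pose phi (p : (TF * TG)%type) := frob2 ((N%:R)^-1 *: \sum_(i < N) gF (Xl p.1) (xi l i p.2)).
have hxiF : forall s i, (s < l)%N -> measurable_fun setT (fun w : TF => xi s i w).
  move=> s i hs _ B mB; rewrite setTI.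
  apply: sub_sigma_algebra; apply: cylS_pre => //; exact: Spast_mem.
have hxiG : forall i, measurable_fun setT (fun w : TG => xi l i w).
  move=> i _ B mB; rewrite setTI.
  apply: sub_sigma_algebra; apply: cylS_pre => //.
  by apply/mapP; exists i => //; exact: mem_enum.
have hXl : rmx_meas Xl.
  have := @run_meas R m n r N dX Xi gF qr topr eta mu tau X0 Qinit hgF hqr htop _ TF l
    (fun w => smpw w) hxiF.
  by case.
have hY : rmx_meas (fun p : (TF * TG)%type => Xl p.1).
  move=> a b.
  have h := measurableT_comp (hXl a b) (@measurable_fst _ _ TF TG).
  exact: h.
have hZ : forall i, measurable_fun setT (fun p : (TF * TG)%type => xi l i p.2).
  move=> i; have h := measurableT_comp (hxiG i) (@measurable_snd _ _ TF TG).
  exact: h.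
have hg : forall i, rmx_meas (fun p : (TF * TG)%type => gF (Xl p.1) (xi l i p.2)).
  move=> i; exact: (hgF hY (hZ i)).
have mphi0 : measurable_fun setT (fun p : (TF * TG)%type => phi p).
  apply: frob2_meas; apply: rmx_scale; apply: rmx_sum => i; exact: hg.
have mphi : measurable_fun setT (EFin \o phi).
  exact/measurable_EFinP.
have H := @fubini_indep R d T P F0 G0 F0m G0m ind phi G2 mphi (fun p => frob2_ge0 _).
have hx : forall x : TF, (\int[P]_w (phi (x, (w : TG)))%:E <= G2%:E)%E.
  move=> x; exact: (hG l (Xl x)).
have := H hx.
by [].
Qed.
End GradBound.

Unset Implicit Arguments.

Theorem lemma4
  (R : realType) (d : measure_display) (T : measurableType d) (P : probability T R)
  (dX : measure_display) (Xi : measurableType dX)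
  (m n r N : nat) (D : 'I_N -> probability Xi R)
  (xi : nat -> 'I_N -> T -> Xi)
  (gF : 'M[R]_(m, n) -> Xi -> 'M[R]_(m, n))
  (gradfi : 'I_N -> 'M[R]_(m, n) -> 'M[R]_(m, n))
  (sigma omega : R)
  (qr : 'M[R]_(m, r) -> 'M[R]_(m, r)) (topr : 'M[R]_(m, n) -> 'M[R]_(m, r))
  (eta mu : R) (tau : nat) (X0 : 'M[R]_(m, n)) (Qinit : 'M[R]_(n, r)) :
  (0 < N)%N -> (n <= m)%N -> (1 <= r)%N -> (r <= n)%N ->
  0 <= mu -> mu < 1 -> (1 <= tau)%N -> 0 < eta ->
  (* sampling: independent across nodes and iterations, xi_t^(i) ~ D_i *)
  (forall t i, measurable_fun setT (xi t i)) ->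
  samples_indep P xi ->
  (forall t i (A : set Xi), measurable A -> P (xi t i @^-1` A) = D i A) ->
  oracle_meas gF ->
  (* grad f_i(X) = E_{xi ~ D_i}[grad F(X; xi)] *)
  (forall i X a b, (D i).-integrable setT (fun z => (gF X z a b)%:E) /\
     (\int[D i]_z (gF X z a b)%:E = (gradfi i X a b)%:E)%E) ->
  (* Assumption (A3) *)
  (forall X, frob2 ((N%:R)^-1 *: \sum_(i < N) gradfi i X) <= omega ^+ 2) ->
  (forall i X, (\int[D i]_z (frob2 (gF X z - gradfi i X))%:E <= (sigma ^+ 2)%:E)%E) ->
  (forall t X, (\int[P]_w (frob2 ((N%:R)^-1 *: \sum_(i < N) gF X (xi t i w)))%:E
                 <= (sigma ^+ 2 + omega ^+ 2)%:E)%E) ->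
  (* the QR and top-r SVD steps: any measurable choice of the factors *)
  (forall A, is_QR_factor A (qr A)) -> mx_borel qr ->
  (forall A, is_top_left_sv A (topr A)) -> mx_borel topr ->
  forall t : nat,
    (\int[P]_w (frob2 (psgd_momentum gF qr topr eta mu tau X0 Qinit t
                         (fun s i => xi s i w)))%:E
     <= (92 * (tau%:R) ^+ 2 * (sigma ^+ 2 + omega ^+ 2)
         / ((1 - mu) ^+ 2 * (r%:R / n%:R) ^+ 2))%:E)%E.
Proof.
move=> N0 hnm hr1 hrn mu0 mu1 tau1 eta0 hxi hind hDi hgF hmean hA3a hA3b hA3c
  hqrF hqrB htopF htopB t.
set G2 := sigma ^+ 2 + omega ^+ 2.
have G20 : 0 <= G2 by rewrite addr_ge0 // sqr_ge0.
have n0 : (0 < n)%N := leq_trans hr1 hrn.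
set dl := (r%:R / n%:R : R).
have dl0 : 0 < dl by rewrite divr_gt0 // ltr0n.
have dl1 : dl <= 1 by rewrite ler_pdivrMr ?ltr0n // mul1r ler_nat.
set rho := rhoc R n r.
have rhoE : rho = 1 - dl / 2 by [].
have rho0 : 0 <= rho by rewrite rhoE; lra.
have rho1 : rho < 1 by rewrite rhoE; lra.
pose Gn w k := fn (gavg gF qr topr eta mu tau X0 Qinit (smpw xi w) k).
pose En w k := fn (eavg gF qr topr eta mu tau X0 Qinit (smpw xi w) k).
pose Dn w k := fn (Dlt gF qr topr eta mu tau X0 Qinit (smpw xi w) k).
pose Mn w k := fn (pst gF qr topr eta mu tau X0 Qinit (smpw xi w) k).1.2.
have hG0 : forall w k, 0 <= Gn w k by move=> w k; exact: fn_ge0.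
have hD : forall w k, Dn w k <= Gn w k + En w k by move=> w k; exact: nf_D.
have hE0 : forall w, En w 0 <= 0.
  by move=> w; rewrite /En eavg0 /fn /frob2 big1 ?sqrtr0 // => i _; rewrite big1 // => j _; rewrite mxE expr0n.
have hE : forall w k, En w k.+1 <= Dn w k.
  by move=> w k; exact: (nf_E _ _ _ _ _ _ _ hqrF htopF hr1 hrn hnm).
have hEr : forall w k, (k %% tau == 0)%N -> En w k.+1 <= rho * Dn w k.
  by move=> w k hk; exact: (nf_Er _ _ _ _ _ _ _ htopF hr1 hrn hnm hk).
have hM0 : forall w, Mn w 0 <= 0.
  by move=> w; rewrite /Mn /fn /frob2 big1 ?sqrtr0 // => i _; rewrite big1 // => j _; rewrite mxE expr0n.
have hM : forall w k, Mn w k.+1 <= mu * Mn w k + Dn w k.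
  by move=> w k; exact: (nf_M _ _ _ _ _ _ hqrF htopF hr1 hrn hnm k mu0).
have [cE [cM [cE0 [cM0 [_ [sM hw]]]]]] :=
  coef_bound tau1 rho0 rho1 mu0 mu1 hG0 hD hE0 hE hEr hM0 hM (leqnn t.+1).
set K := (tau%:R / (1 - rho)) / (1 - mu) in sM.
have K0 : 0 <= K by rewrite /K !divr_ge0 // ?ler0n // subr_ge0 ltW.
pose f l w := frob2 (gavg gF qr topr eta mu tau X0 Qinit (smpw xi w) l).
have f0 : forall l w, 0 <= f l w by move=> l w; exact: frob2_ge0.
have pw : forall w, frob2 (psgd_momentum gF qr topr eta mu tau X0 Qinit t (fun s i => xi s i w))
                   <= K * \sum_(l < t.+1) cM l * f l w.
  move=> w.
  have h1 := (hw w).2.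
  have e1 : frob2 (psgd_momentum gF qr topr eta mu tau X0 Qinit t (fun s i => xi s i w))
            = Mn w t.+1 ^+ 2 by rewrite /Mn fn_sqr.
  rewrite e1.
  have h2 : Mn w t.+1 ^+ 2 <= (\sum_(l < t.+1) cM l * Gn w l) ^+ 2.
    rewrite ler_sqr ?nnegrE ?fn_ge0 //.
    by apply: sumr_ge0 => l _; rewrite mulr_ge0 ?hG0.
  apply: (le_trans h2); apply: (le_trans (sum_CS _ _ cM0)).
  have e2 : \sum_(l < t.+1) cM l * Gn w l ^+ 2 = \sum_(l < t.+1) cM l * f l w.
    by apply: eq_bigr => l _; rewrite /Gn fn_sqr.
  rewrite e2; apply: ler_wpM2r => //.
  by apply: sumr_ge0 => l _; rewrite mulr_ge0 ?f0.
have mst : forall k, st_meas (fun w => psgd_run gF qr topr eta mu tau X0 Qinit k (smpw xi w)).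
  move=> k; exact: (@run_meas R m n r N dX Xi gF qr topr eta mu tau X0 Qinit hgF hqrB htopB _ T k
    (smpw xi) (fun s i _ => hxi s i)).
have mf : forall l, measurable_fun setT (f l).
  move=> l; apply: frob2_meas; apply: rmx_scale; apply: rmx_sum => i.
  have [hX _ _ _] := mst l.
  exact: (hgF _ _ _ _ hX (hxi l i)).
have mmom : measurable_fun setT
    (fun w => frob2 (psgd_momentum gF qr topr eta mu tau X0 Qinit t (fun s i => xi s i w))).
  have [_ _ hMm _] := mst t.+1.
  exact: (frob2_meas hMm).
have fb : forall l, (\int[P]_w (f l w)%:E <= G2%:E)%E.
  move=> l; exact: (grad_bound eta mu tau X0 Qinit hxi hind hgF hqrB htopB hA3c l).
have step1 : (\int[P]_w (frob2 (psgd_momentum gF qr topr eta mu tau X0 Qinit t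
                         (fun s i => xi s i w)))%:E
   <= \int[P]_w (\sum_(l < t.+1) (K * cM l)%:E * (f l w)%:E))%E.
  apply: ge0_le_integral => //.
  - by move=> w _; rewrite lee_fin frob2_ge0.
  - exact/measurable_EFinP.
  - apply: emeasurable_sum => l; apply: measurable_funeM.
    exact/measurable_EFinP.
  - move=> w _; rewrite sumEFin lee_fin.
    apply: (le_trans (pw w)); rewrite mulr_sumr; apply: ler_sum => l _.
    by rewrite mulrA.
have step2 : (\int[P]_w (\sum_(l < t.+1) (K * cM l)%:E * (f l w)%:E)
   = \sum_(l < t.+1) (K * cM l)%:E * \int[P]_w (f l w)%:E)%E.
  rewrite ge0_integral_sum //; last first.
    move=> l w _; apply: mule_ge0; rewrite lee_fin; [exact: mulr_ge0 | exact: f0].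
    by move=> l; apply: measurable_funeM; exact/measurable_EFinP.
  apply: eq_bigr => l _; rewrite ge0_integralZl_EFin //.
  + by move=> w _; rewrite lee_fin.
  + exact/measurable_EFinP.
  + by rewrite mulr_ge0.
have step3 : (\sum_(l < t.+1) (K * cM l)%:E * \int[P]_w (f l w)%:E
   <= (K * K * G2)%:E)%E.
  apply: (@le_trans _ _ (\sum_(l < t.+1) ((K * cM l) * G2)%:E)%E).
    apply: lee_sum => l _; rewrite (EFinM (K * cM l) G2); apply: lee_pmul => //.
    - by rewrite lee_fin mulr_ge0.
    - by apply: integral_ge0 => w _; rewrite lee_fin.
  rewrite sumEFin lee_fin -mulr_suml -mulr_sumr.
  apply: ler_wpM2r => //; apply: ler_wpM2l => //.
apply: (le_trans step1); rewrite step2; apply: (le_trans step3); rewrite lee_fin.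
have mu1' : 0 < 1 - mu by lra.
have KE : K * K = 4 * tau%:R ^+ 2 / ((1 - mu) ^+ 2 * dl ^+ 2).
  rewrite /K rhoE; field.
  by rewrite !gt_eqF.
rewrite KE.
have q0 : 0 <= tau%:R ^+ 2 * G2 / ((1 - mu) ^+ 2 * dl ^+ 2).
  by apply: divr_ge0; apply: mulr_ge0 => //; apply: sqr_ge0.
have -> : 4 * tau%:R ^+ 2 / ((1 - mu) ^+ 2 * dl ^+ 2) * G2 =
          4 * (tau%:R ^+ 2 * G2 / ((1 - mu) ^+ 2 * dl ^+ 2)) by rewrite !mulrA; ring.
have -> : 92 * tau%:R ^+ 2 * G2 / ((1 - mu) ^+ 2 * dl ^+ 2) =
          92 * (tau%:R ^+ 2 * G2 / ((1 - mu) ^+ 2 * dl ^+ 2)) by rewrite !mulrA.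
lra.
Qed.
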